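(* Let $N \in \mathbb{R}^{n \times r}$, $V \in \mathbb{R}^{r \times n}$, and for $\kappa\in\mathbb{R}^r_+$ let $f_\kappa\colon\mathbb{R}^n_+\to\mathbb{R}^n$, $f_\kappa(x) = N_\kappa x^V$. Let $S = \mathrm{im}(N)$ and $s = \mathrm{rank}(N)$. The following are equivalent: (inj) for all $\kappa\in\mathbb{R}^r_+$ and all $x'\in\mathbb{R}^n_+$, $f_\kappa$ is injective on $(x'+S)\cap\mathbb{R}^n_+$; (jac) for all $\kappa \in \mathbb{R}^r_+$ and $x \in \mathbb{R}^n_+$, the Jacobian matrix $J_{f_\kappa}(x)$ is injective on $S$; (min) for all $I\subseteq [n]$, $J\subseteq [r]$ of cardinality $s$, the product $\det(N_{I,J}) \det(V_{J,I})$ either is zero or has the same sign as all other nonzero such products, and at least one such product is nonzero; (sig) $\sigma(\ker(N)) \cap \sigma(V(\Sigma(S^* ))) = \emptyset$.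
   Context: $\mathbb{R}_+$ denotes the strictly positive reals. $(x^V)_j=\prod_i x_i^{v_{ji}}$ (real exponents), $N_\kappa=N\,\mathrm{diag}(\kappa)$, $[n]=\{1,\dots,n\}$, $M_{K,L}$ is the submatrix with rows in $K$ and columns in $L$. $\sigma$ is the componentwise sign vector; for $T\subseteq\mathbb{R}^k$, $\sigma(T)=\{\sigma(x)\mid x\in T\}$ and $\Sigma(T)=\sigma^{-1}(\sigma(T))$; $S^*=S\setminus\{0\}$; $V(T)=\{Vx\mid x\in T\}$. *)

(* Defs.v *)
From HB Require Import structures.
From Stdlib Require Import Reals Lra.
From Stdlib Require Import Classical ClassicalEpsilon FunctionalExtensionality.
From mathcomp Require Import all_boot all_algebra.

Set Implicit Arguments.
Unset Strict Implicit.
Unset Printing Implicit Defensive.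

Local Open Scope R_scope.

Definition Req_bool (x y : R) : bool := if Req_EM_T x y then true else false.

Lemma Req_boolP : Equality.axiom Req_bool.
Proof. move=> x y; rewrite /Req_bool; case: Req_EM_T => H; by constructor. Qed.

HB.instance Definition _ := hasDecEq.Build R Req_boolP.

Definition R_find (P : pred R) (n : nat) : option R :=
  match excluded_middle_informative (exists x, P x) with
  | left H => Some (proj1_sig (constructive_indefinite_description _ H))
  | right _ => None
  end.

Lemma R_find_correct P n x : R_find P n = Some x -> P x.
Proof.
rewrite /R_find; case: excluded_middle_informative => // H [<-].
exact: proj2_sig (constructive_indefinite_description _ H).
Qed.

Lemma R_find_complete (P : pred R) : (exists x, P x) -> exists n, R_find P n.
Proof.
move=> H; exists 0%N; rewrite /R_find; case: excluded_middle_informative => //.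
Qed.

Lemma R_find_ext (P Q : pred R) : P =1 Q -> R_find P =1 R_find Q.
Proof. move=> /functional_extensionality -> //. Qed.

HB.instance Definition _ :=
  hasChoice.Build R R_find_correct R_find_complete R_find_ext.

Lemma R_addA : associative Rplus. Proof. move=> *; ring. Qed.
Lemma R_addC : commutative Rplus. Proof. move=> *; ring. Qed.
Lemma R_add0 : left_id 0 Rplus. Proof. move=> *; ring. Qed.
Lemma R_addN : left_inverse 0 Ropp Rplus. Proof. move=> *; ring. Qed.

HB.instance Definition _ := GRing.isZmodule.Build R R_addA R_addC R_add0 R_addN.

Lemma R_mulA : associative Rmult. Proof. move=> *; ring. Qed.
Lemma R_mulC : commutative Rmult. Proof. move=> *; ring. Qed.
Lemma R_mul1 : left_id 1 Rmult. Proof. move=> *; ring. Qed.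
Lemma R_mulDl : left_distributive Rmult Rplus. Proof. move=> *; ring. Qed.
Lemma R_one_neq0 : ((1:R) != (0:R)).
Proof. apply/eqP; exact R1_neq_R0. Qed.

HB.instance Definition _ :=
  GRing.Zmodule_isComNzRing.Build R R_mulA R_mulC R_mul1 R_mulDl R_one_neq0.

Definition R_inv (x : R) : R := if Req_EM_T x 0 then 0 else Rinv x.

Lemma R_mulV (x : R) : x != 0 -> GRing.mul (R_inv x) x = 1.
Proof.
move=> /eqP H; rewrite /R_inv.
destruct (Req_EM_T x 0) as [E|E]; first by [].
change (Rmult (Rinv x) x = 1); field; exact E.
Qed.

Lemma R_inv0 : R_inv 0 = 0.
Proof. by rewrite /R_inv; case: Req_EM_T. Qed.

HB.instance Definition _ := GRing.ComNzRing_isField.Build R R_mulV R_inv0.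

Local Open Scope ring_scope.

Definition positive (k : nat) (x : 'cV[R]_k) : Prop :=
  forall i, Rlt R0 (x i 0).

Definition monom (n r : nat) (V : 'M[R]_(r, n)) (x : 'cV[R]_n) : 'cV[R]_r :=
  \col_j \prod_(i < n) Rpower (x i 0) (V j i).

Definition Nkappa (n r : nat) (N : 'M[R]_(n, r)) (kappa : 'cV[R]_r) : 'M[R]_(n, r) :=
  N *m diag_mx kappa^T.

Definition fk (n r : nat) (N : 'M[R]_(n, r)) (V : 'M[R]_(r, n))
  (kappa : 'cV[R]_r) (x : 'cV[R]_n) : 'cV[R]_n :=
  Nkappa N kappa *m monom V x.

Definition imN (n r : nat) (N : 'M[R]_(n, r)) (v : 'cV[R]_n) : Prop :=
  exists w : 'cV[R]_r, v = N *m w.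

Definition kerN (n r : nat) (N : 'M[R]_(n, r)) (u : 'cV[R]_r) : Prop :=
  N *m u = 0.

Definition is_jacobian (n : nat) (F : 'cV[R]_n -> 'cV[R]_n) (x : 'cV[R]_n)
  (J : 'M[R]_n) : Prop :=
  forall i j : 'I_n,
    derivable_pt_lim
      (fun t : R => F (x + (t - x j 0) *: delta_mx j 0) i 0) (x j 0) (J i j).

Definition Rsgn (a : R) : int :=
  if Rlt_dec R0 a then 1%Z else if Rlt_dec a R0 then (-1)%Z else 0%Z.

Definition sigma (k : nat) (x : 'cV[R]_k) : {ffun 'I_k -> int} :=
  [ffun i => Rsgn (x i 0)].

Definition sigma_set (k : nat) (T : 'cV[R]_k -> Prop) (s : {ffun 'I_k -> int}) : Prop :=
  exists x, T x /\ sigma x = s.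

Definition Sigma (k : nat) (T : 'cV[R]_k -> Prop) (x : 'cV[R]_k) : Prop :=
  sigma_set T (sigma x).

Definition nonzero_part (k : nat) (T : 'cV[R]_k -> Prop) (x : 'cV[R]_k) : Prop :=
  T x /\ x <> 0.

Definition mx_image (k m : nat) (V : 'M[R]_(m, k)) (T : 'cV[R]_k -> Prop)
  (y : 'cV[R]_m) : Prop :=
  exists x, T x /\ y = V *m x.

(* a subset of [k] of cardinality s, given as a strictly increasing map *)
Definition incr (s k : nat) (f : 'I_s -> 'I_k) : Prop :=
  forall a b : 'I_s, (a < b)%N -> (f a < f b)%N.

Definition minor_prod (n r s : nat) (N : 'M[R]_(n, r)) (V : 'M[R]_(r, n))
  (I : 'I_s -> 'I_n) (J : 'I_s -> 'I_r) : R :=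
  \det (mxsub I J N) * \det (mxsub J I V).

Definition cond_inj (n r : nat) (N : 'M[R]_(n, r)) (V : 'M[R]_(r, n)) : Prop :=
  forall kappa : 'cV[R]_r, positive kappa ->
  forall x' : 'cV[R]_n, positive x' ->
  forall x y : 'cV[R]_n,
    imN N (x - x') -> positive x ->
    imN N (y - x') -> positive y ->
    fk N V kappa x = fk N V kappa y -> x = y.

Definition cond_jac (n r : nat) (N : 'M[R]_(n, r)) (V : 'M[R]_(r, n)) : Prop :=
  forall kappa : 'cV[R]_r, positive kappa ->
  forall x : 'cV[R]_n, positive x ->
  forall J : 'M[R]_n, is_jacobian (fk N V kappa) x J ->
  forall v w : 'cV[R]_n, imN N v -> imN N w -> J *m v = J *m w -> v = w.

Definition cond_min (n r : nat) (N : 'M[R]_(n, r)) (V : 'M[R]_(r, n)) : Prop :=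
  let s := \rank N in
  (forall (I I' : 'I_s -> 'I_n) (J J' : 'I_s -> 'I_r),
     incr I -> incr J -> incr I' -> incr J' ->
     minor_prod N V I J <> 0 -> minor_prod N V I' J' <> 0 ->
     (Rlt R0 (minor_prod N V I J) <-> Rlt R0 (minor_prod N V I' J')))
  /\ (exists (I : 'I_s -> 'I_n) (J : 'I_s -> 'I_r),
        incr I /\ incr J /\ minor_prod N V I J <> 0).

Definition cond_sig (n r : nat) (N : 'M[R]_(n, r)) (V : 'M[R]_(r, n)) : Prop :=
  forall s : {ffun 'I_r -> int},
    ~ (sigma_set (kerN N) s /\
       sigma_set (mx_image V (Sigma (nonzero_part (imN N)))) s).

(* Main.v *)
Require Import Defs.
From HB Require Import structures.
From Stdlib Require Import Reals Lra.
From Stdlib Require Import Classical FunctionalExtensionality.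
From mathcomp Require Import all_boot all_algebra fingroup perm.
Import Defs.
Set Implicit Arguments.
Unset Strict Implicit.
Unset Printing Implicit Defensive.
Import GRing.Theory.
Local Open Scope ring_scope.

Definition incrP (s k : nat) (f : 'I_s -> 'I_k) : Prop :=
  forall a b : 'I_s, (a < b)%N -> (f a < f b)%N.

Definition incrb s m (g : {ffun 'I_s -> 'I_m}) : bool :=
  [forall a : 'I_s, forall b : 'I_s, (a < b)%N ==> (g a < g b)%N].

Lemma incrbP s m (g : {ffun 'I_s -> 'I_m}) : reflect (incrP g) (incrb g).
Proof.
apply: (iffP forallP) => [H a b ab | H a]; last by apply/forallP => b; apply/implyP; exact: H.
by have /forallP/(_ b)/implyP := H a; apply.
Qed.

Lemma incr_inj s m (f : 'I_s -> 'I_m) : incrP f -> injective f.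
Proof.
move=> H a b E; apply/eqP; case: (ltngtP a b) => [ab|ba|/val_inj->//].
- by have := H _ _ ab; rewrite E ltnn.
- by have := H _ _ ba; rewrite E ltnn.
Qed.

Definition lto m : rel 'I_m := fun a b => (a < b)%N.

Lemma lto_trans m : transitive (@lto m).
Proof. move=> a b c; exact: ltn_trans. Qed.
Lemma lto_irr m : irreflexive (@lto m).
Proof. move=> a; exact: ltnn. Qed.

Lemma enum_ord_sorted s : sorted (@lto s) (enum 'I_s).
Proof.
have: sorted ltn (map val (enum 'I_s)) by rewrite val_enum_ord; exact: iota_ltn_sorted.
by rewrite sorted_map.
Qed.

Lemma incr_sorted s m (f : 'I_s -> 'I_m) : incrP f -> sorted (@lto m) (map f (enum 'I_s)).
Proof.
move=> H; rewrite sorted_map; apply: sub_sorted (enum_ord_sorted s).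
move=> a b; exact: H.
Qed.

Lemma incr_eq s m (g h : 'I_s -> 'I_m) : incrP g -> incrP h ->
  (forall k, exists k', g k = h k') -> g =1 h.
Proof.
move=> Hg Hh Hsub.
have ug : uniq (map g (enum 'I_s)) by rewrite map_inj_uniq ?enum_uniq //; exact: incr_inj.
have uh : uniq (map h (enum 'I_s)) by rewrite map_inj_uniq ?enum_uniq //; exact: incr_inj.
have sub : {subset map g (enum 'I_s) <= map h (enum 'I_s)}.
  move=> x /mapP [k _ ->]; have [k' ->] := Hsub k; exact: map_f (mem_enum _ _).
have [|_ eqi] := uniq_min_size ug sub; first by rewrite !size_map.
have E := irr_sorted_eq (@lto_trans m) (@lto_irr m) (incr_sorted Hg) (incr_sorted Hh) eqi.
move=> k; have /eq_in_map E' := E; apply: E'; exact: mem_enum.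
Qed.

Lemma decomp_ex s m (f : 'I_s -> 'I_m) : injective f ->
  exists (g : {ffun 'I_s -> 'I_m}) (t : 'S_s), incrP g /\ forall i, f i = g (t i).
Proof.
move=> finj.
pose e := [seq x <- enum 'I_m | x \in codom f].
have se : sorted (@lto m) e by apply: sorted_filter; [exact: lto_trans | exact: enum_ord_sorted].
have ue : uniq e by rewrite filter_uniq ?enum_uniq.
have uc : uniq (codom f) by rewrite map_inj_uniq ?enum_uniq.
have eqi : e =i codom f by move=> x; rewrite mem_filter mem_enum andbT.
have size_e : size e = s.
  by rewrite (perm_size (uniq_perm ue uc eqi)) size_codom card_ord.
have fe : forall j, f j \in e by move=> j; rewrite eqi codom_f.
have idx_lt : forall j, (index (f j) e < s)%N by move=> j; rewrite -size_e index_mem.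
pose sig (j : 'I_s) : 'I_s := Ordinal (idx_lt j).
have sig_inj : injective sig.
  move=> a b /(congr1 val) /= E; apply: finj.
  by rewrite -(nth_index (f a) (fe a)) E nth_index.
exists [ffun k => nth (f k) e k], (perm sig_inj); split.
- move=> a b ab; have ha : (a < s)%N := ltn_ord a.
  have hb : (b < s)%N := ltn_ord b.
  rewrite !ffunE (set_nth_default (f b) (f a)) ?size_e //.
  by apply: (sorted_ltn_nth (@lto_trans m) (f b) se); rewrite ?inE ?size_e.
- by move=> i; rewrite ffunE permE /= (set_nth_default (f i)) ?size_e // nth_index.
Qed.

Lemma decomp_uniq s m (g g' : 'I_s -> 'I_m) (t t' : 'S_s) : incrP g -> incrP g' ->
  (forall i, g (t i) = g' (t' i)) -> g =1 g' /\ t = t'.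
Proof.
move=> Hg Hg' E.
have gg : g =1 g'.
  apply: incr_eq => // k; exists (t' (t^-1 k)%g); by rewrite -E permKV.
split => //; apply/permP => i; apply: (incr_inj Hg); by rewrite E gg.
Qed.

Definition compf s m (p : {ffun 'I_s -> 'I_m} * {perm 'I_s}) : {ffun 'I_s -> 'I_m} :=
  [ffun i => p.1 (p.2 i)].
Definition decomp s m (f : {ffun 'I_s -> 'I_m}) : {ffun 'I_s -> 'I_m} * {perm 'I_s} :=
  odflt (f, 1%g) [pick p | incrb p.1 && (f == compf p)].

Lemma decompK s m (f : {ffun 'I_s -> 'I_m}) : injectiveb f -> compf (decomp f) = f.
Proof.
move/injectiveP => finj; rewrite /decomp; case: pickP => [p /andP [_ /eqP ->] //|].
have [g [t [Hg E]]] := decomp_ex finj.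
move/(_ (g, t)); rewrite /= (introT (incrbP g) Hg) /=.
suff -> : f = compf (g, t) by rewrite eqxx.
by apply/ffunP => i; rewrite ffunE E.
Qed.

Lemma decomp_incr s m (f : {ffun 'I_s -> 'I_m}) : injectiveb f -> incrb (decomp f).1.
Proof.
move/injectiveP => finj; rewrite /decomp; case: pickP => [p /andP [-> _] //|].
have [g [t [Hg E]]] := decomp_ex finj.
move/(_ (g, t)); rewrite /= (introT (incrbP g) Hg) /=.
suff -> : f = compf (g, t) by rewrite eqxx.
by apply/ffunP => i; rewrite ffunE E.
Qed.

Lemma compfK s m (p : {ffun 'I_s -> 'I_m} * {perm 'I_s}) : incrb p.1 -> decomp (compf p) = p.
Proof.
move=> Hp; rewrite /decomp; case: pickP => [q /andP [Hq /eqP E]|].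
- have E' : forall i, p.1 (p.2 i) = q.1 (q.2 i).
    by move=> i; have := congr1 (fun F : {ffun 'I_s -> 'I_m} => F i) E; rewrite !ffunE.
  have [gg tt] := decomp_uniq (elimT (incrbP _) Hp) (elimT (incrbP _) Hq) E'.
  case: p q Hp Hq E E' gg tt => [g t] [g' t'] /= _ _ _ _ gg ->; congr (_, _).
  by apply/ffunP => i; rewrite gg.
- by move/(_ p); rewrite Hp eqxx.
Qed.

Lemma compf_inj s m (p : {ffun 'I_s -> 'I_m} * {perm 'I_s}) : incrb p.1 -> injectiveb (compf p).
Proof.
move=> /incrbP Hp; apply/injectiveP => a b; rewrite !ffunE => /(incr_inj Hp).
exact: perm_inj.
Qed.

Lemma group_inj (V : nmodType) s m (H : {ffun 'I_s -> 'I_m} -> V) :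
  \sum_(f : {ffun 'I_s -> 'I_m} | injectiveb f) H f = \sum_(g : {ffun 'I_s -> 'I_m} | incrb g) \sum_(t : {perm 'I_s}) H (compf (g, t)).
Proof.
rewrite pair_big /= (reindex_onto (@compf s m) (@decomp s m)); last exact: decompK.
apply: eq_big => [p|[g t] _]; last by [].
rewrite andbT; apply/idP/idP => [/andP [Hi /eqP <-]|Hp].
- exact: decomp_incr.
- by rewrite compf_inj // compfK // eqxx.
Qed.

Lemma det_rowsub_perm (R : comRingType) s m (Q : 'M[R]_(m, s)) (g : {ffun 'I_s -> 'I_m}) (t : {perm 'I_s}) :
  \det (rowsub (compf (g, t)) Q) = (-1) ^+ t * \det (rowsub g Q).
Proof.
have -> : rowsub (compf (g, t)) Q = row_perm t (rowsub g Q).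
  by apply/matrixP => i j; rewrite !mxE ffunE.
by rewrite row_permE det_mulmx det_perm.
Qed.

Lemma cauchy_binet (R : comRingType) s m (P : 'M[R]_(s, m)) (Q : 'M[R]_(m, s)) :
  \det (P *m Q) = \sum_(g : {ffun 'I_s -> 'I_m} | incrb g) \det (colsub g P) * \det (rowsub g Q).
Proof.
have step1 : \det (P *m Q) =
    \sum_(f : {ffun 'I_s -> 'I_m}) (\prod_i P i (f i)) * \det (rowsub f Q).
  rewrite /determinant.
  transitivity (\sum_(t : {perm 'I_s}) \sum_(f : {ffun 'I_s -> 'I_m})
                 (-1) ^+ t * \prod_i (P i (f i) * Q (f i) (t i))).
    apply: eq_bigr => t _; rewrite -big_distrr /=; congr (_ * _).
    rewrite -(bigA_distr_bigA (fun i k => P i k * Q k (t i))) /=; apply: eq_bigr => i _; rewrite mxE; done.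
  rewrite exchange_big; apply: eq_bigr => f _; rewrite big_distrr /=.
  apply: eq_bigr => t _; rewrite big_split /= mulrCA; congr (_ * (_ * _)).
  by apply: eq_bigr => i _; rewrite mxE.
rewrite step1 (bigID (fun f : {ffun 'I_s -> 'I_m} => injectiveb f)) /=.
rewrite [X in _ + X]big1 ?addr0; last first.
  move=> f /injectivePn [a [b nab fab]].
  rewrite (@determinant_alternate _ _ (rowsub f Q) a b nab) ?mulr0 //.
  by move=> j; rewrite !mxE fab.
rewrite group_inj; apply: eq_bigr => g _.
transitivity (\sum_(t : {perm 'I_s}) ((-1) ^+ t * \prod_i (colsub g P) i (t i)) * \det (rowsub g Q)).
  apply: eq_bigr => t _; rewrite det_rowsub_perm mulrA [_ * (-1) ^+ t]mulrC.
  by congr (_ * _ * _); apply: eq_bigr => i _; rewrite !ffunE mxE.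
by rewrite -big_distrl.
Qed.

Lemma colsub_diag (R : comRingType) s m p (A : 'M[R]_(s, m)) (a : 'I_m -> R) (g : 'I_p -> 'I_m) :
  colsub g (A *m diag_mx (\row_j a j)) = colsub g A *m diag_mx (\row_k a (g k)).
Proof. by apply/matrixP => i j; rewrite !mul_mx_diag !mxE. Qed.

Lemma det_weighted (R : comRingType) s r n (A : 'M[R]_(s, r)) (a : 'I_r -> R)
    (V : 'M[R]_(r, n)) (b : 'I_n -> R) (Z : 'M[R]_(n, s)) :
  \det (A *m diag_mx (\row_j a j) *m V *m diag_mx (\row_i b i) *m Z) =
  \sum_(J : {ffun 'I_s -> 'I_r} | incrb J) \sum_(I : {ffun 'I_s -> 'I_n} | incrb I)
     \det (colsub J A) * \det (mxsub J I V) * \det (rowsub I Z) *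
     (\prod_k a (J k)) * (\prod_k b (I k)).
Proof.
have -> : A *m diag_mx (\row_j a j) *m V *m diag_mx (\row_i b i) *m Z =
  (A *m diag_mx (\row_j a j)) *m ((V *m diag_mx (\row_i b i)) *m Z) by rewrite !mulmxA.
rewrite cauchy_binet; apply: eq_bigr => J _.
rewrite colsub_diag det_mulmx det_diag.
rewrite -mul_rowsub_mx -mul_rowsub_mx cauchy_binet.
rewrite !big_distrr /=; apply: eq_bigr => I _.
rewrite colsub_diag det_mulmx det_diag.
have -> : colsub I (rowsub J V) = mxsub J I V by apply/matrixP => i j; rewrite !mxE.
under eq_bigr do rewrite mxE.
have -> : \prod_i (\row_k b (I k)) 0 i = \prod_k b (I k) by apply: eq_bigr => k _; rewrite mxE.
set a1 := \det (colsub J A); set pa := \prod_(i < s) a (J i); set d2 := \det (mxsub J I V).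
set pb := \prod_k b (I k); set d3 := \det (rowsub I Z).
rewrite !mulrA (mulrAC _ pb d3) (mulrAC a1 pa d2) (mulrAC _ pa d3).
done.
Qed.

Lemma RaddE (x y : R) : x + y = Rplus x y. Proof. by []. Qed.
Lemma RmulE (x y : R) : x * y = Rmult x y. Proof. by []. Qed.
Lemma RoppE (x : R) : - x = Ropp x. Proof. by []. Qed.
Lemma R0E : (@GRing.zero _ : R) = IZR 0. Proof. by []. Qed.
Lemma R1E : (@GRing.one _ : R) = IZR 1. Proof. by []. Qed.
Ltac clean := repeat match goal with
  | |- context [(?x : R)] => progress change (x : R) with x
  | |- context [@fun_of_matrix ?T ?m ?k ?A ?i ?j] =>
      progress change (@fun_of_matrix T m k A i j) with (@fun_of_matrix R m k A i j)
  end.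
Lemma RinvE (x : R) : x <> IZR 0 -> x^-1 = Rinv x.
Proof. by move=> H; rewrite /GRing.inv /= /R_inv; case: Req_EM_T. Qed.

Ltac toR := rewrite ?RaddE ?RmulE ?RoppE ?R0E ?R1E; clean;
  try match goal with |- @eq _ ?a ?b => change (@eq R a b) end.

Lemma Rsgn_eq a b : (Rlt 0 a <-> Rlt 0 b) -> (Rlt a 0 <-> Rlt b 0) -> Rsgn a = Rsgn b.
Proof.
move=> H1 H2; rewrite /Rsgn.
do 4 (case: Rlt_dec => ?); by try (exfalso; tauto).
Qed.

Lemma Rsgn_pos a : Rsgn a = 1%Z <-> Rlt 0 a.
Proof. rewrite /Rsgn; case: Rlt_dec => h1; last case: Rlt_dec => h2; split => //. Qed.
Lemma Rsgn_neg a : Rsgn a = (-1)%Z <-> Rlt a 0.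
Proof.
rewrite /Rsgn; case: Rlt_dec => h1; last case: Rlt_dec => h2; split => //; lra.
Qed.
Lemma Rsgn_zero a : Rsgn a = 0%Z <-> a = IZR 0.
Proof.
rewrite /Rsgn; case: Rlt_dec => h1; last case: Rlt_dec => h2; split => //; lra.
Qed.

Lemma Rsgn_mul_pos c a : Rlt 0 c -> Rsgn (c * a) = Rsgn a.
Proof.
move=> hc; apply: Rsgn_eq; toR; split => h.
- by apply: (Rmult_lt_reg_l c) => //; lra.
- by apply: Rmult_lt_0_compat.
- by apply: (Rmult_lt_reg_l c) => //; lra.
- have := Rmult_lt_compat_l c _ _ hc h; lra.
Qed.

Lemma Rsgn_exp_sub a b : Rsgn (exp a - exp b) = Rsgn (a - b).
Proof.
apply: Rsgn_eq; toR; split => h.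
- have : Rlt (exp b) (exp a) by lra.
  move/exp_lt_inv; lra.
- have : Rlt b a by lra. move/exp_increasing; lra.
- have : Rlt (exp a) (exp b) by lra.
  move/exp_lt_inv; lra.
- have : Rlt a b by lra. move/exp_increasing; lra.
Qed.

Lemma Rsgn_ln_sub x y : Rlt 0 x -> Rlt 0 y -> Rsgn (ln x - ln y) = Rsgn (x - y).
Proof.
move=> hx hy; apply: Rsgn_eq; toR; split => h.
- have : Rlt (ln y) (ln x) by lra.
  move/ln_lt_inv; move=> /(_ hy hx); lra.
- have : Rlt y x by lra. move/(ln_increasing _ _ hy); lra.
- have : Rlt (ln x) (ln y) by lra.
  move/ln_lt_inv; move=> /(_ hx hy); lra.
- have : Rlt x y by lra. move/(ln_increasing _ _ hx); lra.
Qed.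

Lemma ratio_pos u d : Rsgn u = Rsgn d ->
  exists k, Rlt 0 k /\ k * d = u.
Proof.
move=> E; case: (Req_dec d 0) => [d0|dn0].
- exists (IZR 1); split; first lra.
  have : Rsgn u = 0%Z by rewrite E; apply/Rsgn_zero.
  move/Rsgn_zero => ->; rewrite d0; exact: mul1r.
- exists (Rdiv u d); split.
  + case: (Rlt_le_dec 0 d) => hd.
    * have : Rlt 0 u by apply/Rsgn_pos; rewrite E; apply/Rsgn_pos.
      move=> hu; apply: Rdiv_lt_0_compat => //.
    * have hd' : Rlt d 0 by lra.
      have : Rlt u 0 by apply/Rsgn_neg; rewrite E; apply/Rsgn_neg.
      move=> hu; rewrite /Rdiv; apply: Rmult_neg_neg => //.
      by apply: Rinv_lt_0_compat.
  + change (Rmult (Rdiv u d) d = u); field; exact dn0.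
Qed.

Definition rat (u d : R) : R := if d == 0 then 1 else Rdiv u d.

Lemma rat_pos u d : Rsgn u = Rsgn d -> Rlt 0 (rat u d).
Proof.
rewrite /rat; case: eqP => [_ _|dn0 E]; first (toR; lra).
case: (Rlt_le_dec 0 d) => hd.
- have hu : Rlt 0 u by apply/Rsgn_pos; rewrite E; apply/Rsgn_pos.
  exact: Rdiv_lt_0_compat.
- have hd' : Rlt d 0 by case: (Rle_lt_or_eq_dec _ _ hd) => // h; exfalso; apply: dn0; rewrite h.
  have hu : Rlt u 0 by apply/Rsgn_neg; rewrite E; apply/Rsgn_neg.
  rewrite /Rdiv; apply: Rmult_neg_neg => //; exact: Rinv_lt_0_compat.
Qed.

Lemma rat_mul u d : Rsgn u = Rsgn d -> rat u d * d = u.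
Proof.
rewrite /rat; case: eqP => [d0 E|dn0 _].
- have : Rsgn u = 0%Z by rewrite E d0; apply/Rsgn_zero.
  by move/Rsgn_zero => ->; rewrite d0 mulr0.
- change (Rmult (Rdiv u d) d = u); field; exact dn0.
Qed.

Definition Lvec n (x : 'cV[R]_n) : 'cV[R]_n := \col_i ln (x i 0).

Lemma monomE n r (V : 'M[R]_(r, n)) x j : monom V x j 0 = exp ((V *m Lvec x) j 0).
Proof.
rewrite !mxE.
rewrite (big_morph exp (id1 := 1) (op1 := *%R) (id2 := 0) (op2 := +%R) exp_plus exp_0).
apply: eq_bigr => i _; rewrite mxE /Rpower; congr exp; exact: mulrC.
Qed.

Lemma monom_pos n r (V : 'M[R]_(r, n)) x j : Rlt 0 (monom V x j 0).
Proof. rewrite monomE; exact: exp_pos. Qed.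

Lemma monom_diff_sgn n r (V : 'M[R]_(r, n)) x y j :
  Rsgn (monom V x j 0 - monom V y j 0) = Rsgn ((V *m (Lvec x - Lvec y)) j 0).
Proof. by rewrite !monomE Rsgn_exp_sub mulmxBr !mxE. Qed.

Lemma sigmaP k (u w : 'cV[R]_k) : (forall i : 'I_k, Rsgn (u i 0) = Rsgn (w i 0)) -> sigma u = sigma w.
Proof. by move=> H; apply/ffunP => i; rewrite !ffunE. Qed.

Lemma sigmaE k (u w : 'cV[R]_k) : sigma u = sigma w -> forall i : 'I_k, Rsgn (u i 0) = Rsgn (w i 0).
Proof. by move=> E i; have := congr1 (fun f : {ffun 'I_k -> int} => f i) E; rewrite !ffunE. Qed.

Lemma diag_col_mul r (k d : 'cV[R]_r) : diag_mx k^T *m d = \col_j (k j 0 * d j 0).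
Proof. by apply/matrixP => i j; rewrite mul_diag_mx !mxE (ord1 j). Qed.

Lemma fk_sub n r (N : 'M[R]_(n, r)) (V : 'M[R]_(r, n)) k x y :
  fk N V k x - fk N V k y = N *m \col_j (k j 0 * (monom V x j 0 - monom V y j 0)).
Proof.
rewrite /fk /Nkappa -mulmxBr -mulmxA diag_col_mul; congr (_ *m _).
by apply/matrixP => i j; rewrite !mxE.
Qed.

Lemma Lvec_pos_sub n (x y : 'cV[R]_n) i : positive x -> positive y ->
  Rsgn (fun_of_matrix (Lvec x - Lvec y) i 0) = Rsgn (fun_of_matrix (x - y) i 0).
Proof. by move=> hx hy; rewrite !mxE Rsgn_ln_sub. Qed.

Lemma sig_inj n r (N : 'M[R]_(n, r)) (V : 'M[R]_(r, n)) : cond_sig N V -> cond_inj N V.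
Proof.
move=> Hsig k kpos x' x'pos x y [a xa] xpos [b yb] ypos fxy.
case: (eqVneq x y) => // nxy; exfalso.
pose z := x - y.
have zS : imN N z by exists (a - b); rewrite mulmxBr -xa -yb /z opprB addrA subrK.
have zn0 : z <> 0 by move/eqP; rewrite subr_eq0; apply/negP.
pose w := Lvec x - Lvec y.
pose u := \col_j (k j 0 * (monom V x j 0 - monom V y j 0)).
have Nu : N *m u = 0 by rewrite -fk_sub fxy subrr.
apply: (Hsig (sigma u)); split; first by exists u.
exists (V *m w); split; last first.
  symmetry; apply: sigmaP => j; rewrite /u mxE; toR; rewrite Rsgn_mul_pos //; exact: monom_diff_sgn.
exists w; split => //; exists z; split; first by split.
by apply: sigmaP => i; rewrite Lvec_pos_sub.
Qed.

Lemma inj_sig n r (N : 'M[R]_(n, r)) (V : 'M[R]_(r, n)) : cond_inj N V -> cond_sig N V.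
Proof.
move=> Hinj s [[u [Nu su]] [y [[w [[z [[zS zn0] zw]] ey]] sy]]].
have zwi := sigmaE zw.
pose Y : 'cV[R]_n := \col_i rat (z i 0) (exp (w i 0) - 1).
have hsg : forall i, Rsgn (z i 0) = Rsgn (exp (w i 0) - 1).
  by move=> i; rewrite zwi -exp_0 Rsgn_exp_sub Rminus_0_r.
have Ypos : positive Y by move=> i; rewrite mxE; exact: rat_pos.
have hY : forall i, Y i 0 = rat (z i 0) (exp (w i 0) - 1) by move=> i; rewrite mxE.
clearbody Y.
pose X := Y + z.
have hXz : X - Y = z by rewrite /X addrC addKr.
have XY : forall i, X i 0 = Y i 0 * exp (w i 0).
  move=> i; rewrite /X mxE hY; have := rat_mul (hsg i).
  set q := rat _ _ => E; rewrite -E; toR; rewrite /Rminus; ring.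
clearbody X.
have Xpos : positive X.
  by move=> i; rewrite XY; apply: Rmult_lt_0_compat; [exact: Ypos | exact: exp_pos].
have LXY : Lvec X - Lvec Y = w.
  apply/matrixP => i j; rewrite (ord1 j) !mxE XY ln_mult; last exact: exp_pos; last exact: Ypos.
  rewrite ln_exp; toR; ring.
pose D := \col_j (monom V X j 0 - monom V Y j 0).
have hD : forall j, D j 0 = monom V X j 0 - monom V Y j 0 by move=> j; rewrite mxE.
clearbody D.
have sD : forall j, Rsgn (u j 0) = Rsgn (D j 0).
  move=> j; rewrite hD monom_diff_sgn LXY -ey.
  exact: (sigmaE (etrans su (esym sy)) j).
pose k := \col_j rat (u j 0) (D j 0).
have kpos : positive k by move=> j; rewrite mxE; exact: rat_pos.
have hk : forall j, k j 0 = rat (u j 0) (D j 0) by move=> j; rewrite mxE.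
clearbody k.
have ku : \col_j (k j 0 * (monom V X j 0 - monom V Y j 0)) = u.
  apply/matrixP => j c; rewrite (ord1 c) mxE hk -hD; exact: rat_mul (sD j).
have fXY : fk N V k X = fk N V k Y.
  by apply/eqP; rewrite -subr_eq0 fk_sub ku Nu.
have hYY : imN N (Y - Y) by exists 0; rewrite subrr mulmx0.
have hXY : imN N (X - Y) by rewrite hXz.
have XeY := Hinj k kpos Y Ypos X Y hXY Xpos hYY Ypos fXY.
by apply: zn0; rewrite -hXz XeY subrr.
Qed.

Lemma dsum (I : Type) (l : seq I) (F : I -> R -> R) (d : I -> R) x :
  (forall i, derivable_pt_lim (F i) x (d i)) ->
  derivable_pt_lim (fun t => \sum_(i <- l) F i t) x (\sum_(i <- l) d i).
Proof.
move=> H; elim: l => [|i l IH].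
- rewrite big_nil; apply: (derivable_pt_lim_ext (fct_cte 0)); last exact: derivable_pt_lim_const.
  by move=> z; rewrite big_nil.
- rewrite big_cons; apply: (derivable_pt_lim_ext (plus_fct (F i) (fun t => \sum_(j <- l) F j t))).
    by move=> z; rewrite big_cons.
  exact: derivable_pt_lim_plus.
Qed.

Lemma dscal (f : R -> R) c x l : derivable_pt_lim f x l ->
  derivable_pt_lim (fun t => c * f t) x (c * l).
Proof. move=> H; exact: (derivable_pt_lim_scal f c x l H). Qed.

Lemma dcst c x : derivable_pt_lim (fun _ => c) x 0.
Proof. exact: derivable_pt_lim_const. Qed.

Lemma dexp_comp (g : R -> R) x l : derivable_pt_lim g x l ->
  derivable_pt_lim (fun t => exp (g t)) x (exp (g x) * l).
Proof. move=> H; exact: (derivable_pt_lim_comp g exp x l (exp (g x)) H (derivable_pt_lim_exp _)). Qed.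

Definition Jac n r (N : 'M[R]_(n, r)) (V : 'M[R]_(r, n)) (k : 'cV[R]_r) (x : 'cV[R]_n) : 'M[R]_n :=
  N *m diag_mx (\row_j (k j 0 * monom V x j 0)) *m V *m diag_mx (\row_i (x i 0)^-1).

Lemma JacE n r (N : 'M[R]_(n, r)) (V : 'M[R]_(r, n)) k x i j :
  Jac N V k x i j = (\sum_l N i l * (k l 0 * monom V x l 0) * V l j) * (x j 0)^-1.
Proof.
rewrite /Jac -!mulmxA mul_mx_diag mul_diag_mx mxE big_distrl; apply: eq_bigr => l _.
by rewrite !mxE /= !mulrA.
Qed.

Lemma fk_line n r (N : 'M[R]_(n, r)) (V : 'M[R]_(r, n)) (k : 'cV[R]_r) (x : 'cV[R]_n) (i j : 'I_n) (t : R) :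
  fk N V k (x + (t - x j 0) *: delta_mx j 0) i 0 =
  \sum_l (N i l * k l 0) * exp (\sum_m V l m * ln (if m == j then t else x m 0)).
Proof.
rewrite /fk /Nkappa mxE; apply: eq_bigr => l _.
rewrite monomE mul_mx_diag !mxE; congr (_ * exp _); apply: eq_bigr => m _.
rewrite !mxE eqxx andbT; case: eqP => [->|_]; congr (_ * ln _) => /=.
- by rewrite mulr1n mulr1 addrC subrK.
- by rewrite mulr0n mulr0 addr0.
Qed.

Lemma jac_ok n r (N : 'M[R]_(n, r)) (V : 'M[R]_(r, n)) k x :
  positive x -> is_jacobian (fk N V k) x (Jac N V k x).
Proof.
move=> xpos i j.
apply: (derivable_pt_lim_ext (fun t => \sum_l (N i l * k l 0) *
   exp (\sum_m V l m * ln (if m == j then t else x m 0)))).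
  by move=> t; rewrite fk_line.
set G := fun l t => \sum_m V l m * ln (if m == j then t else x m 0).
have dG : forall l, derivable_pt_lim (G l) (x j 0)
           (\sum_m V l m * (if m == j then Rinv (x j 0) else 0)).
  move=> l; apply: dsum => m; apply: dscal; case: eqP => _.
  - exact: derivable_pt_lim_ln.
  - exact: dcst.
have -> : Jac N V k x i j = \sum_l (N i l * k l 0) * (exp (G l (x j 0)) *
           \sum_m V l m * (if m == j then Rinv (x j 0) else 0)).
  rewrite JacE big_distrl; apply: eq_bigr => l _.
  rewrite (bigD1 j) //= eqxx big1 ?addr0; last by move=> m /negbTE ->; exact: mulr0.
  have -> : G l (x j 0) = (V *m Lvec x) l 0.
    rewrite /G mxE; apply: eq_bigr => m _; rewrite mxE; by case: eqP => [->|].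
  rewrite -monomE RinvE; last by have := xpos j; lra.
  toR; ring.
apply: dsum => l; apply: dscal; apply: dexp_comp; exact: dG.
Qed.

Lemma jac_uniq n (F : 'cV[R]_n -> 'cV[R]_n) x J J' :
  is_jacobian F x J -> is_jacobian F x J' -> J = J'.
Proof. by move=> H H'; apply/matrixP => i j; exact: uniqueness_limite (H i j) (H' i j). Qed.

Lemma diag_row_mul m (d : 'I_m -> R) (c : 'cV[R]_m) :
  diag_mx (\row_i d i) *m c = \col_i (d i * c i 0).
Proof. by apply/matrixP => i j; rewrite mul_diag_mx !mxE (ord1 j). Qed.

Lemma Jac_mul n r (N : 'M[R]_(n, r)) (V : 'M[R]_(r, n)) k x (z : 'cV[R]_n) :
  Jac N V k x *m z =
  N *m \col_j ((k j 0 * monom V x j 0) * (V *m \col_i ((x i 0)^-1 * z i 0)) j 0).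
Proof. by rewrite /Jac -!mulmxA !diag_row_mul. Qed.

Lemma sig_jac n r (N : 'M[R]_(n, r)) (V : 'M[R]_(r, n)) : cond_sig N V -> cond_jac N V.
Proof.
move=> Hsig k kpos x xpos J HJ v w [a va] [b wb] Jvw.
have EJ : J = Jac N V k x := jac_uniq HJ (jac_ok N V k xpos).
case: (eqVneq v w) => // nvw; exfalso.
pose z := v - w.
have zS : imN N z by exists (a - b); rewrite mulmxBr -va -wb.
have zn0 : z <> 0 by move/eqP; rewrite subr_eq0; apply/negP.
have Jz : Jac N V k x *m z = 0 by rewrite -EJ mulmxBr Jvw subrr.
pose w' : 'cV[R]_n := \col_i ((x i 0)^-1 * z i 0).
pose u : 'cV[R]_r := \col_j ((k j 0 * monom V x j 0) * (V *m w') j 0).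
have Nu : N *m u = 0 by rewrite -Jz Jac_mul.
apply: (Hsig (sigma u)); split; first by exists u.
exists (V *m w'); split; last first.
  symmetry; apply: sigmaP => j; rewrite /u mxE; toR; rewrite Rsgn_mul_pos //.
  apply: Rmult_lt_0_compat; [exact: kpos | exact: monom_pos].
exists w'; split => //; exists z; split; first by split.
symmetry; apply: sigmaP => i; rewrite /w' mxE; toR; rewrite Rsgn_mul_pos //.
rewrite RinvE; last by have := xpos i; lra.
apply: Rinv_0_lt_compat; exact: xpos.
Qed.

Lemma jac_sig n r (N : 'M[R]_(n, r)) (V : 'M[R]_(r, n)) : cond_jac N V -> cond_sig N V.
Proof.
move=> Hjac s [[u [Nu su]] [y [[w [[z [[zS zn0] zw]] ey]] sy]]].
have zwi := sigmaE zw.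
pose X : 'cV[R]_n := \col_i rat (z i 0) (w i 0).
have Xpos : positive X by move=> i; rewrite mxE; exact: rat_pos.
have hX : forall i, X i 0 * w i 0 = z i 0 by move=> i; rewrite mxE; exact: rat_mul.
clearbody X.
have ww : \col_i ((X i 0)^-1 * z i 0) = w.
  apply/matrixP => i c; rewrite (ord1 c) mxE -hX mulrA mulVr ?mul1r //.
  rewrite unitfE; apply/eqP => h; have := Xpos i; rewrite h; exact: Rlt_irrefl.
pose k : 'cV[R]_r := \col_j rat (u j 0) (monom V X j 0 * (V *m w) j 0).
have suy : forall j, Rsgn (u j 0) = Rsgn (monom V X j 0 * (V *m w) j 0).
  move=> j; toR; rewrite Rsgn_mul_pos; last exact: monom_pos.
  by rewrite -ey; exact: (sigmaE (etrans su (esym sy)) j).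
have kpos : positive k by move=> j; rewrite mxE; exact: rat_pos.
have hk : forall j, k j 0 * (monom V X j 0 * (V *m w) j 0) = u j 0.
  by move=> j; rewrite mxE; exact: rat_mul.
clearbody k.
have Jz : Jac N V k X *m z = Jac N V k X *m 0.
  rewrite mulmx0 Jac_mul ww -Nu; congr (_ *m _); apply/matrixP => j c.
  by rewrite (ord1 c) mxE -mulrA hk.
have := Hjac k kpos X Xpos _ (jac_ok N V k Xpos) z 0 zS _ Jz.
move=> H; apply: zn0; apply: H; exists 0; by rewrite mulmx0.
Qed.

Lemma RaddE' (x y : R) : x + y = Rplus x y. Proof. by []. Qed.
Lemma RmulE' (x y : R) : x * y = Rmult x y. Proof. by []. Qed.
Lemma RoppE' (x : R) : - x = Ropp x. Proof. by []. Qed.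
Lemma R0E' : (@GRing.zero _ : R) = IZR 0. Proof. by []. Qed.
Lemma R1E' : (@GRing.one _ : R) = IZR 1. Proof. by []. Qed.
Ltac clean' := repeat match goal with
  | |- context [(?x : R)] => progress change (x : R) with x
  | |- context [@fun_of_matrix ?T ?m ?k ?A ?i ?j] =>
      progress change (@fun_of_matrix T m k A i j) with (@fun_of_matrix R m k A i j)
  end.
Ltac toR' := rewrite ?RaddE' ?RmulE' ?RoppE' ?R0E' ?R1E'; clean';
  try match goal with |- @eq _ ?a ?b => change (@eq R a b) end.

Lemma cont_ext (f g : R -> R) : (forall t, f t = g t) -> continuity f -> continuity g.
Proof. by move=> H; have -> : g = f by apply: functional_extensionality => t; rewrite H. Qed.

Lemma cont_sum (I : Type) (l : seq I) (P : pred I) (F : I -> R -> R) :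
  (forall i, continuity (F i)) -> continuity (fun t => \sum_(i <- l | P i) F i t).
Proof.
move=> H; elim: l => [|i l IH].
- apply: (cont_ext (f := fun _ => 0)); first by move=> t; rewrite big_nil.
  exact: continuity_const.
- case Pi: (P i).
  + apply: (cont_ext (f := fun t => Rplus (F i t) (\sum_(j <- l | P j) F j t))).
      by move=> t; rewrite big_cons Pi.
    exact: continuity_plus.
  + apply: (cont_ext (f := fun t => \sum_(j <- l | P j) F j t)) => //.
    by move=> t; rewrite big_cons Pi.
Qed.

Lemma cont_prod (I : Type) (l : seq I) (P : pred I) (F : I -> R -> R) :
  (forall i, continuity (F i)) -> continuity (fun t => \prod_(i <- l | P i) F i t).
Proof.
move=> H; elim: l => [|i l IH].
- apply: (cont_ext (f := fun _ => 1)); first by move=> t; rewrite big_nil.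
  exact: continuity_const.
- case Pi: (P i).
  + apply: (cont_ext (f := fun t => Rmult (F i t) (\prod_(j <- l | P j) F j t))).
      by move=> t; rewrite big_cons Pi.
    exact: continuity_mult.
  + apply: (cont_ext (f := fun t => \prod_(j <- l | P j) F j t)) => //.
    by move=> t; rewrite big_cons Pi.
Qed.

Definition Phi s n r (c : {ffun 'I_s -> 'I_n} -> {ffun 'I_s -> 'I_r} -> R)
  (a : 'I_r -> R) (b : 'I_n -> R) : R :=
  \sum_(J : {ffun 'I_s -> 'I_r} | incrb J) \sum_(I : {ffun 'I_s -> 'I_n} | incrb I)
     c I J * (\prod_k a (J k)) * (\prod_k b (I k)).

Lemma Phi_cont s n r c (a : 'I_r -> R -> R) (b : 'I_n -> R -> R) :
  (forall j, continuity (a j)) -> (forall i, continuity (b i)) ->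
  continuity (fun t => @Phi s n r c (fun j => a j t) (fun i => b i t)).
Proof.
move=> ha hb; rewrite /Phi; apply: cont_sum => J; apply: cont_sum => I.
apply: continuity_mult; last by apply: cont_prod.
apply: continuity_mult; first exact: continuity_const.
exact: cont_prod.
Qed.

Definition posf m (a : 'I_m -> R) := forall j, Rlt 0 (a j).

Lemma prod_pos s m (a : 'I_m -> R) (J : 'I_s -> 'I_m) : posf a -> Rlt 0 (\prod_k a (J k)).
Proof.
move=> ha; apply: (big_ind (fun x : R => Rlt 0 x)) => //.
- exact: Rlt_0_1.
- move=> x y; exact: Rmult_lt_0_compat.
Qed.

Lemma sum_ge0 (I : finType) (P : pred I) (F : I -> R) :
  (forall i, P i -> Rle 0 (F i)) -> Rle 0 (\sum_(i | P i) F i).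
Proof.
move=> H; apply: (big_ind (fun x : R => Rle 0 x)) => //.
- exact: Rle_refl.
- move=> x y; exact: Rplus_le_le_0_compat.
Qed.

Lemma Phi_pos s n r c a b (I0 : {ffun 'I_s -> 'I_n}) (J0 : {ffun 'I_s -> 'I_r}) :
  (forall I J, incrb I -> incrb J -> Rle 0 (c I J)) ->
  incrb I0 -> incrb J0 -> Rlt 0 (c I0 J0) -> posf a -> posf b ->
  Rlt 0 (@Phi s n r c a b).
Proof.
move=> Hc hI hJ hc ha hb.
have term_ge0 : forall I J, incrb I -> incrb J -> Rle 0 (c I J * (\prod_k a (J k)) * (\prod_k b (I k))).
  move=> I J hI' hJ'; apply: Rmult_le_pos; last exact: Rlt_le (prod_pos _ hb).
  apply: Rmult_le_pos; first exact: Hc.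
  exact: Rlt_le (prod_pos _ ha).
rewrite /Phi (bigD1 J0) //= (bigD1 I0) //=.
set T1 := c I0 J0 * _ * _.
set S2 := \sum_(I | _) _.
set S3 := \sum_(J | _) _.
have h1 : Rlt 0 T1.
  apply: Rmult_lt_0_compat; last exact: prod_pos.
  apply: Rmult_lt_0_compat => //; exact: prod_pos.
have h2 : Rle 0 S2.
  by apply: sum_ge0 => I /andP [hI' _]; apply: term_ge0.
have h3 : Rle 0 S3.
  apply: sum_ge0 => J /andP [hJ' _]; apply: sum_ge0 => I hI'; exact: term_ge0.
clearbody T1 S2 S3; toR'; lra.
Qed.

Lemma Phi_opp s n r c a b :
  @Phi s n r (fun I J => - c I J) a b = - @Phi s n r c a b.
Proof.
rewrite /Phi -sumrN; apply: eq_bigr => J _; rewrite -sumrN; apply: eq_bigr => I _.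
by rewrite !mulNr.
Qed.

Lemma prod_ind s m (J J1 : {ffun 'I_s -> 'I_m}) : incrb J -> incrb J1 ->
  \prod_k (if J k \in codom J1 then 1 else 0 : R) = if J == J1 then 1 else 0.
Proof.
move=> /incrbP hJ /incrbP hJ1; case: eqP => [->|neq].
- by apply: big1 => k _; rewrite codom_f.
- have [k hk] : exists k, J k \notin codom J1.
    apply: NNPP => H; apply: neq; apply/ffunP => k.
    apply: (incr_eq hJ hJ1) => k'.
    have : J k' \in codom J1 by apply/negPn/negP => h; apply: H; exists k'.
    move=> /codomP [k'' ->]; by exists k''.
  by rewrite (bigD1 k) //= (negbTE hk) mul0r.
Qed.

Lemma cid : continuity (fun e : R => e).
Proof. exact: (derivable_continuous id derivable_id). Qed.

Lemma Phi_approx s n r c (I1 : {ffun 'I_s -> 'I_n}) (J1 : {ffun 'I_s -> 'I_r}) :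
  incrb I1 -> incrb J1 -> c I1 J1 <> 0 ->
  exists a b, posf a /\ posf b /\ Rsgn (@Phi s n r c a b) = Rsgn (c I1 J1).
Proof.
move=> hI hJ hc.
pose ae (e : R) := fun j : 'I_r => if j \in codom J1 then 1 else e.
pose be (e : R) := fun i : 'I_n => if i \in codom I1 then 1 else e.
pose F e := Phi c (ae e) (be e).
have F0 : F 0 = c I1 J1.
  have pA : forall J, incrb J -> \prod_k ae 0 (J k) = if J == J1 then 1 else 0.
    by move=> J hJ'; exact: prod_ind.
  have pB : forall I, incrb I -> \prod_k be 0 (I k) = if I == I1 then 1 else 0.
    by move=> I hI'; exact: prod_ind.
  rewrite /F /Phi.
  transitivity (\sum_(J : {ffun 'I_s -> 'I_r} | incrb J) \sum_(I : {ffun 'I_s -> 'I_n} | incrb I)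
     c I J * (if J == J1 then 1 else 0) * (if I == I1 then 1 else 0)).
    by apply: eq_bigr => J hJ'; apply: eq_bigr => I hI'; rewrite pA // pB.
  rewrite (bigD1 J1) //= [X in _ + X]big1 ?addr0; last first.
    by move=> J' /andP [_ nJ]; apply: big1 => I' _; rewrite (negbTE nJ) mulr0 mul0r.
  rewrite (bigD1 I1) //= [X in _ + X]big1 ?addr0; last first.
    by move=> I' /andP [_ nI]; rewrite (negbTE nI) mulr0.
  by rewrite !eqxx !mulr1.
have Fc : continuity F.
  apply: (@Phi_cont s n r c (fun j e => ae e j) (fun i e => be e i)) => [j|i].
  - rewrite /ae; case: (j \in codom J1); [exact: continuity_const | exact: cid].
  - rewrite /be; case: (i \in codom I1); [exact: continuity_const | exact: cid].
have [alp [alp0 Halp]] := Fc 0 (Rabs (c I1 J1)) (Rabs_pos_lt _ hc).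
have e0 : Rlt 0 (Rdiv alp 2) by lra.
have := Halp (Rdiv alp 2); rewrite /dist /= /Rdist.
move=> /(_ _) H.
have {H} H : Rlt (Rabs (F (Rdiv alp 2) - F 0)) (Rabs (c I1 J1)).
  apply: H; split; first by split => //; apply: Rlt_not_eq; exact: e0.
  rewrite R0E' Rminus_0_r Rabs_right; lra.
have pa : posf (ae (Rdiv alp 2)) by move=> j; rewrite /ae; case: (_ \in _) => //; exact: Rlt_0_1.
have pb : posf (be (Rdiv alp 2)) by move=> i; rewrite /be; case: (_ \in _) => //; exact: Rlt_0_1.
exists (ae (Rdiv alp 2)), (be (Rdiv alp 2)); split => //; split => //.
move: H; rewrite F0 -/(F _); set y := F _ => H.
have [cp|cn] : Rlt 0 (c I1 J1) \/ Rlt (c I1 J1) 0.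
  by case: (Rlt_le_dec 0 (c I1 J1)) => h; [left|right; case: (Rle_lt_or_eq_dec _ _ h) => // h'; exfalso; apply: hc; rewrite h'].
- rewrite [Rabs (c I1 J1)]Rabs_right in H; last lra.
  have [H1 H2] := Rabs_def2 _ _ H.
  have -> : Rsgn y = 1%Z by apply/Rsgn_pos; lra.
  by symmetry; apply/Rsgn_pos.
- rewrite [Rabs (c I1 J1)]Rabs_left in H; last lra.
  have [H1 H2] := Rabs_def2 _ _ H.
  have -> : Rsgn y = (-1)%Z by apply/Rsgn_neg; lra.
  by symmetry; apply/Rsgn_neg.
Qed.

Lemma comb_pos (p q t : R) : Rlt 0 p -> Rlt 0 q -> Rle 0 t -> Rle t 1 ->
  Rlt 0 (Rplus (Rmult (Rminus 1 t) p) (Rmult t q)).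
Proof.
move=> hp hq ht0 ht1; case: (Rle_lt_or_eq_dec _ _ ht0) => [tp|<-].
- have : Rlt 0 (Rmult t q) by apply: Rmult_lt_0_compat.
  have : Rle 0 (Rmult (Rminus 1 t) p) by apply: Rmult_le_pos; lra.
  lra.
- have : Rlt 0 (Rmult (Rminus 1 0) p) by apply: Rmult_lt_0_compat; lra.
  lra.
Qed.

Lemma Phi_zero s n r c a1 b1 a2 b2 :
  posf a1 -> posf b1 -> posf a2 -> posf b2 ->
  Rlt 0 (@Phi s n r c a1 b1) -> Rlt (@Phi s n r c a2 b2) 0 ->
  exists a b, posf a /\ posf b /\ @Phi s n r c a b = 0.
Proof.
move=> pa1 pb1 pa2 pb2 h1 h2.
pose f t := Phi c (fun j => Rplus (Rmult (Rminus 1 t) (a2 j)) (Rmult t (a1 j)))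
                  (fun i => Rplus (Rmult (Rminus 1 t) (b2 i)) (Rmult t (b1 i))).
have fc : continuity f.
  apply: (@Phi_cont s n r c (fun j t => Rplus (Rmult (Rminus 1 t) (a2 j)) (Rmult t (a1 j)))
                     (fun i t => Rplus (Rmult (Rminus 1 t) (b2 i)) (Rmult t (b1 i)))) => [j|i].
  - apply: continuity_plus; apply: continuity_mult; try exact: continuity_const; try exact: cid.
    apply: continuity_minus; [exact: continuity_const | exact: cid].
  - apply: continuity_plus; apply: continuity_mult; try exact: continuity_const; try exact: cid.
    apply: continuity_minus; [exact: continuity_const | exact: cid].
have f0 : f 0 = Phi c a2 b2.
  rewrite /f; congr Phi; apply: functional_extensionality => j; toR'; rewrite /Rminus; ring.
have f1 : f 1 = Phi c a1 b1.
  rewrite /f; congr Phi; apply: functional_extensionality => j; toR'; rewrite /Rminus; ring.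
have hf0 : Rlt (f 0) 0 by rewrite f0.
have hf1 : Rlt 0 (f 1) by rewrite f1.
have [z [[hz0 hz1] fz]] := IVT f 0 1 fc Rlt_0_1 hf0 hf1.
exists (fun j => Rplus (Rmult (Rminus 1 z) (a2 j)) (Rmult z (a1 j))),
       (fun i => Rplus (Rmult (Rminus 1 z) (b2 i)) (Rmult z (b1 i))).
split; first by move=> j; apply: comb_pos.
split; first by move=> i; apply: comb_pos.
exact: fz.
Qed.

Definition samesign s n r (c : {ffun 'I_s -> 'I_n} -> {ffun 'I_s -> 'I_r} -> R) :=
  forall I J I' J', incrb I -> incrb J -> incrb I' -> incrb J' ->
    c I J <> 0 -> c I' J' <> 0 -> (Rlt 0 (c I J) <-> Rlt 0 (c I' J')).
Definition somenz s n r (c : {ffun 'I_s -> 'I_n} -> {ffun 'I_s -> 'I_r} -> R) :=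
  exists I J, incrb I /\ incrb J /\ c I J <> 0.
Definition nonvan s n r (c : {ffun 'I_s -> 'I_n} -> {ffun 'I_s -> 'I_r} -> R) :=
  forall a b, posf a -> posf b -> @Phi s n r c a b <> 0.

Lemma nz_cases (x : R) : x <> 0 -> Rlt 0 x \/ Rlt x 0.
Proof.
move=> h; case: (Rlt_le_dec 0 x) => h'; [by left|right].
case: (Rle_lt_or_eq_dec _ _ h') => // e; by exfalso; apply: h; rewrite e.
Qed.

Lemma L2a s n r c : @samesign s n r c -> somenz c -> nonvan c.
Proof.
move=> Hs [I0 [J0 [hI [hJ hc]]]] a b pa pb.
case: (nz_cases hc) => h.
- have Hc : forall I J, incrb I -> incrb J -> Rle 0 (c I J).
    move=> I J hI' hJ'; case: (Rle_lt_dec 0 (c I J)) => // hn.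
    have hn0 : c I J <> 0 by move=> e; rewrite e in hn; exact: Rlt_irrefl hn.
    have := proj2 (Hs _ _ _ _ hI' hJ' hI hJ hn0 hc) h; lra.
  have hp := Phi_pos Hc hI hJ h pa pb.
  move=> e; rewrite e in hp; exact: Rlt_irrefl hp.
- have Hc : forall I J, incrb I -> incrb J -> Rle 0 ((fun I J => - c I J) I J).
    move=> I J hI' hJ' /=; case: (Rle_lt_dec (c I J) 0) => hn; first by toR'; lra.
    have hn0 : c I J <> 0 by move=> e; rewrite e in hn; exact: Rlt_irrefl hn.
    have := proj1 (Hs _ _ _ _ hI' hJ' hI hJ hn0 hc) hn; lra.
  have h' : Rlt 0 ((fun I J => - c I J) I0 J0) by rewrite /=; toR'; lra.
  have hp := Phi_pos Hc hI hJ h' pa pb.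
  rewrite Phi_opp in hp; move=> e; rewrite e oppr0 in hp; exact: Rlt_irrefl hp.
Qed.

Lemma L2_mixed s n r c (I J : {ffun 'I_s -> 'I_n}) (J1 J2 : {ffun 'I_s -> 'I_r}) :
  @nonvan s n r c -> incrb I -> incrb J1 -> incrb J -> incrb J2 ->
  Rlt 0 (c I J1) -> Rlt (c J J2) 0 -> False.
Proof.
move=> Hn hI hJ1 hJ hJ2 p1 p2.
have n1 : c I J1 <> 0 by move=> e; rewrite e in p1; exact: Rlt_irrefl p1.
have n2 : c J J2 <> 0 by move=> e; rewrite e in p2; exact: Rlt_irrefl p2.
have [a1 [b1 [pa1 [pb1 s1]]]] := Phi_approx hI hJ1 n1.
have [a2 [b2 [pa2 [pb2 s2]]]] := Phi_approx hJ hJ2 n2.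
have q1 : Rlt 0 (Phi c a1 b1) by apply/Rsgn_pos; rewrite s1; apply/Rsgn_pos.
have q2 : Rlt (Phi c a2 b2) 0 by apply/Rsgn_neg; rewrite s2; apply/Rsgn_neg.
have [a [b [pa [pb z]]]] := Phi_zero pa1 pb1 pa2 pb2 q1 q2.
exact: Hn a b pa pb z.
Qed.

Lemma L2b s n r c : @nonvan s n r c -> samesign c /\ somenz c.
Proof.
move=> Hn; split.
- move=> I J I' J' hI hJ hI' hJ' n1 n2; split => h.
  + case: (nz_cases n2) => // h2; exfalso; exact: L2_mixed Hn hI hJ hI' hJ' h h2.
  + case: (nz_cases n1) => // h1; exfalso; exact: L2_mixed Hn hI' hJ' hI hJ h h1.
- apply: NNPP => H.
  have p1 : posf (fun _ : 'I_r => 1 : R) by move=> j; exact: Rlt_0_1.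
  have p2 : posf (fun _ : 'I_n => 1 : R) by move=> j; exact: Rlt_0_1.
  apply: (Hn _ _ p1 p2); rewrite /Phi; apply: big1 => J hJ; apply: big1 => I hI.
  case: (eqVneq (c I J) 0) => [->|nz]; first by rewrite !mul0r.
  by exfalso; apply: H; exists I, J; split => //; split => //; apply/eqP.
Qed.

Definition cmin n r s (N : 'M[R]_(n, r)) (V : 'M[R]_(r, n))
  (I : {ffun 'I_s -> 'I_n}) (J : {ffun 'I_s -> 'I_r}) : R := minor_prod N V I J.

Lemma detM n r s (N : 'M[R]_(n, r)) (V : 'M[R]_(r, n)) (Z : 'M[R]_(n, s)) (A : 'M[R]_(s, r))
  (a : 'I_r -> R) (b : 'I_n -> R) : N = Z *m A ->
  \det (A *m diag_mx (\row_j a j) *m V *m diag_mx (\row_i b i) *m Z) = Phi (@cmin _ _ s N V) a b.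
Proof.
move=> NZA; rewrite det_weighted /Phi; apply: eq_bigr => J _; apply: eq_bigr => I _.
rewrite /cmin /minor_prod NZA mxsub_mul det_mulmx.
set d1 := \det (colsub J A); set d2 := \det (mxsub J I V); set d3 := \det (rowsub I Z).
set p1 := \prod_k a (J k); set p2 := \prod_k b (I k); toR; ring.
Qed.

Lemma realize n r (V : 'M[R]_(r, n)) (a : 'I_r -> R) (b : 'I_n -> R) :
  posf a -> posf b -> exists k x, positive k /\ positive x /\
   \row_j (k j 0 * monom V x j 0) = \row_j a j /\ \row_i (x i 0)^-1 = \row_i b i.
Proof.
move=> pa pb.
have bn0 : forall i, b i != 0 by move=> i; apply/eqP => e; have := pb i; rewrite e; exact: Rlt_irrefl.
pose x : 'cV[R]_n := \col_i (b i)^-1.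
have xpos : positive x.
  move=> i; rewrite mxE RinvE; last by move/eqP: (bn0 i).
  exact: Rinv_0_lt_compat (pb i).
have mn0 : forall j, monom V x j 0 != 0.
  by move=> j; apply/eqP => e; have := monom_pos V x j; rewrite e; exact: Rlt_irrefl.
pose k : 'cV[R]_r := \col_j (a j * (monom V x j 0)^-1).
have kpos : positive k.
  move=> j; rewrite mxE RinvE; last by move/eqP: (mn0 j).
  apply: Rmult_lt_0_compat; first exact: pa.
  exact: Rinv_0_lt_compat (monom_pos V x j).
have hk : forall j, k j 0 * monom V x j 0 = a j by move=> j; rewrite [k j 0]mxE mulfVK.
have hx : forall i, (x i 0)^-1 = b i by move=> i; rewrite mxE invrK.
clearbody k x.
exists k, x; split => //; split => //; split.
- by apply/matrixP => i j; rewrite [in LHS]mxE [in RHS]mxE hk.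
- by apply/matrixP => i j; rewrite [in LHS]mxE [in RHS]mxE hx.
Qed.

Lemma L1 n r (N : 'M[R]_(n, r)) (V : 'M[R]_(r, n)) s (Z : 'M[R]_(n, s)) (A : 'M[R]_(s, r))
  (L : 'M[R]_(s, n)) (B : 'M[R]_(r, s)) :
  N = Z *m A -> L *m Z = 1%:M -> A *m B = 1%:M ->
  (cond_jac N V <-> nonvan (@cmin _ _ s N V)).
Proof.
move=> NZA LZ AB.
have JacZ : forall k x, Jac N V k x *m Z =
   Z *m (A *m diag_mx (\row_j (k j 0 * monom V x j 0)) *m V *m diag_mx (\row_i (x i 0)^-1) *m Z).
  by move=> k x; rewrite /Jac NZA !mulmxA.
have Zinj : forall c : 'cV[R]_s, Z *m c = 0 -> c = 0.
  by move=> c e; rewrite -[c]mul1mx -LZ -mulmxA e mulmx0.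
have ZS : forall c : 'cV[R]_s, imN N (Z *m c).
  by move=> c; exists (B *m c); rewrite NZA -mulmxA (mulmxA A) AB mul1mx.
split.
- move=> Hjac a b pa pb e.
  have [k [x [kpos [xpos [ea eb]]]]] := realize V pa pb.
  pose M := A *m diag_mx (\row_j a j) *m V *m diag_mx (\row_i b i) *m Z.
  have dM : \det M^T == 0 by rewrite det_tr /M (@detM _ _ _ N V Z A a b NZA) e.
  have [v vn0 vM] := det0P dM.
  have Mc : M *m v^T = 0 by rewrite -[M]trmxK -trmx_mul vM trmx0.
  have Jz : Jac N V k x *m (Z *m v^T) = Jac N V k x *m 0.
    by rewrite mulmx0 mulmxA JacZ ea eb -/M -mulmxA Mc mulmx0.
  have Jz' : Jac N V k x *m (Z *m v^T) = Jac N V k x *m (Z *m 0) by rewrite mulmx0.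
  have z0 := Hjac k kpos x xpos _ (jac_ok N V k xpos) _ _ (ZS v^T) (ZS 0) Jz'.
  rewrite mulmx0 in z0; have := Zinj _ z0.
  move=> /(congr1 trmx); rewrite trmxK trmx0 => v0; by rewrite v0 eqxx in vn0.
- move=> Hn k kpos x xpos J HJ v w [av ->] [bw ->] Jvw.
  have EJ : J = Jac N V k x := jac_uniq HJ (jac_ok N V k xpos).
  pose c := A *m (av - bw).
  have zc : N *m av - N *m bw = Z *m c by rewrite -mulmxBr NZA mulmxA.
  pose M := A *m diag_mx (\row_j (k j 0 * monom V x j 0)) *m V *m diag_mx (\row_i (x i 0)^-1) *m Z.
  have Mc : M *m c = 0.
    apply: Zinj; rewrite mulmxA -JacZ -mulmxA -zc -EJ mulmxBr Jvw subrr //.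
  have dM : \det M != 0.
    rewrite /M (@detM _ _ _ N V Z A _ _ NZA); apply/eqP; apply: Hn.
    + move=> j; apply: Rmult_lt_0_compat; [exact: kpos | exact: monom_pos].
    + move=> i; rewrite RinvE; first exact: Rinv_0_lt_compat (xpos i).
      by move=> e; have := xpos i; rewrite e; exact: Rlt_irrefl.
  have Mu : M \in unitmx by rewrite unitmxE unitfE.
  have c0 : c = 0 by rewrite -[c](mulKmx Mu) Mc mulmx0.
  by apply/eqP; rewrite -subr_eq0 zc c0 mulmx0.
Qed.

Lemma incr_ffun s m (f : 'I_s -> 'I_m) : incr f -> incrb (finfun f).
Proof. by move=> H; apply/incrbP => a b ab; rewrite !ffunE; exact: H. Qed.

Lemma mp_ffun n r s (N : 'M[R]_(n, r)) (V : 'M[R]_(r, n)) (I : 'I_s -> 'I_n) (J : 'I_s -> 'I_r) :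
  @cmin n r s N V (finfun I) (finfun J) = minor_prod N V I J.
Proof.
rewrite /cmin /minor_prod; f_equal; f_equal; apply/matrixP => i j; by rewrite !mxE !ffunE.
Qed.

Lemma min_iff n r (N : 'M[R]_(n, r)) (V : 'M[R]_(r, n)) :
  cond_min N V <-> samesign (@cmin n r (\rank N) N V) /\ somenz (@cmin n r (\rank N) N V).
Proof.
split.
- move=> [H1 [I [J [hI [hJ hn]]]]]; split.
  + move=> I1 J1 I2 J2 h1 h2 h3 h4 n1 n2.
    exact: (H1 I1 I2 J1 J2 (elimT (incrbP _) h1) (elimT (incrbP _) h2)
              (elimT (incrbP _) h3) (elimT (incrbP _) h4) n1 n2).
  + exists (finfun I), (finfun J); split; first exact: incr_ffun.
    split; first exact: incr_ffun.
    by rewrite mp_ffun.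
- move=> [H1 [I [J [hI [hJ hn]]]]]; split.
  + move=> I1 I2 J1 J2 h1 h2 h3 h4 n1 n2.
    have := H1 (finfun I1) (finfun J1) (finfun I2) (finfun J2) (incr_ffun h1) (incr_ffun h2)
              (incr_ffun h3) (incr_ffun h4).
    by rewrite !mp_ffun; apply.
  + exists (fun_of_fin I), (fun_of_fin J); split; first exact: (elimT (incrbP _) hI).
    split; first exact: (elimT (incrbP _) hJ).
    exact: hn.
Qed.

Unset Implicit Arguments.

Theorem mainTheorem16 (n r : nat) (N : 'M[R]_(n, r)) (V : 'M[R]_(r, n)) :
  (cond_inj N V <-> cond_jac N V) /\
  (cond_inj N V <-> cond_min N V) /\
  (cond_inj N V <-> cond_sig N V).
Proof.
have [L LZ] := row_fullP (col_base_full N).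
have [B AB] := row_freeP (row_base_free N).
have NZA : N = col_base N *m row_base N by rewrite mulmx_base.
have HL1 := L1 V NZA LZ AB.
have hIS := @inj_sig n r N V; have hSI := @sig_inj n r N V.
have js := @jac_sig n r N V; have sj := @sig_jac n r N V.
have HM := min_iff N V.
split; [|split]; [| |by split].
- split; [move=> h; exact: sj (hIS h) | move=> h; exact: hSI (js h)].
- split.
  + move=> h; apply/HM; apply: L2b; apply/HL1; exact: sj (hIS h).
  + move=> h; apply: hSI; apply: js; apply/HL1; apply: L2a; by case/HM: h.
Qed.
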